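(* Let $S\subseteq[r]$. For $i\in\{1,\dots,r\}$, let $N(i)$ be the number of permutations $a_1a_2\cdots a_{r+1}$ of $1,\dots,r+1$ with descent set $S$ in which $r+1$ appears before $i$. Then $N(i)$ does not depend on $i$.
   Context: The descent set of a permutation $a_1a_2\cdots a_{r+1}$ is $\{j\in[r]: a_j>a_{j+1}\}$. *)

(* Defs.v *)
From mathcomp Require Import all_boot all_fingroup.
Set Implicit Arguments. Unset Strict Implicit. Unset Printing Implicit Defensive.

(* A permutation a_1 ... a_{r+1} of 1..r+1 is encoded as s : {perm 'I_r.+1},
   with a_{p+1} = (s p) + 1 (positions and values shifted down by one).
   A subset S of [r] = {1..r} is encoded as a set of 'I_r, where k : 'I_r
   stands for the element k+1 of [r]. *)

(* a_j > a_{j+1}, for j = k+1, i.e. s k > s (k+1) in 0-indexed positions. *)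
Definition descent_at (r : nat) (s : {perm 'I_r.+1}) (k : 'I_r) : bool :=
  s (widen_ord (leqnSn r) k) > s (lift ord0 k).

Definition descent_set (r : nat) (s : {perm 'I_r.+1}) : {set 'I_r} :=
  [set k | descent_at s k].

Definition pos_of (r : nat) (s : {perm 'I_r.+1}) (v : 'I_r.+1) : 'I_r.+1 :=
  (s^-1)%g v.

(* N(i) for i in {1..r}: encoded i = val i0 + 1 with i0 : 'I_r (so the value
   i corresponds to 0-indexed value i0 = widen i0), and r+1 is ord_max. *)
Definition Ncount (r : nat) (S : {set 'I_r}) (i0 : 'I_r) : nat :=
  #|[set s : {perm 'I_r.+1} | (descent_set s == S) &&
      (pos_of s ord_max < pos_of s (widen_ord (leqnSn r) i0))]|.

(* Main.v *)
Require Import Defs.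
From mathcomp Require Import all_boot all_fingroup.
From mathcomp Require Import zify.

Section Sw.
Variable r : nat.
Variables a b : 'I_r.+1.
Hypothesis hab : val b = (val a).+1.

Definition adj (s : {perm 'I_r.+1}) :=
  ((val ((s^-1)%g a)).+1 == val ((s^-1)%g b)) ||
  ((val ((s^-1)%g b)).+1 == val ((s^-1)%g a)).

Definition sw (s : {perm 'I_r.+1}) : {perm 'I_r.+1} :=
  if adj s then s else (s * tperm a b)%g.

Lemma invsw s v : ((s * tperm a b)^-1)%g v = (s^-1)%g (tperm a b v).
Proof. by rewrite invMg tpermV permM. Qed.

Lemma adj_sw s : adj (s * tperm a b)%g = adj s.
Proof. by rewrite /adj !invsw tpermL tpermR orbC. Qed.

Lemma swK s : sw (sw s) = s.
Proof.
rewrite {2}/sw; case: ifP => h; first by rewrite /sw h.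
rewrite /sw adj_sw h -mulgA.
have -> : (tperm a b * tperm a b = 1)%g by apply/permP => x; rewrite permM tpermK perm1.
by rewrite mulg1.
Qed.

Ltac tov := repeat match goal with
 | H : @eq (ordinal _) ?u ?v |- _ => move/(congr1 val): H => /= H
 | H : ~ @eq (ordinal _) ?u ?v |- _ =>
     have ?: val u <> val v by (let E := fresh in move=> E; apply: H; apply: val_inj); clear H
end.

Lemma tperm_lt (x y : 'I_r.+1) : ~~ ((x == a) && (y == b)) -> ~~ ((x == b) && (y == a)) ->
  (tperm a b x < tperm a b y) = (x < y).
Proof.
rewrite /tperm !permE /=.
have := ltn_ord x; have := ltn_ord y.
have E : forall u v : 'I_r.+1, (u == v) = (nat_of_ord u == nat_of_ord v) by [].
have hab' : nat_of_ord b = (nat_of_ord a).+1 by exact: hab.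
rewrite !E.
case: (nat_of_ord x =P a); case: (nat_of_ord x =P b); case: (nat_of_ord y =P a); case: (nat_of_ord y =P b) => /= H1 H2 H3 H4 H5 H6 H7 H8; move: H7 H8 => /= H7 H8; try done; apply/idP/idP; lia.
Qed.

Lemma desc_sw s : descent_set (sw s) = descent_set s.
Proof.
rewrite /sw; case: ifP => h //.
apply/setP => k; rewrite !inE /descent_at !permM.
rewrite tperm_lt //.
- apply/negP; case/andP => /eqP E1 /eqP E2; move/negbT: h; rewrite /adj.
  by rewrite -E1 -E2 !permK /= eqxx ?orbT.
- apply/negP; case/andP => /eqP E1 /eqP E2; move/negbT: h; rewrite /adj.
  by rewrite -E1 -E2 !permK /= eqxx ?orbT.
Qed.

End Sw.

Lemma step (r : nat) (S : {set 'I_r}) (i j : 'I_r) :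
  val j = (val i).+1 -> Ncount S i = Ncount S j.
Proof.
move=> hij.
set a := widen_ord (leqnSn r) i. set b := widen_ord (leqnSn r) j.
have hab : val b = (val a).+1 by [].
rewrite /Ncount -(card_preimset _ (can_inj (@swK _ a b))).
apply: eq_card => s; rewrite !inE (@desc_sw _ a b hab).
case: (descent_set s == S) => //=.
have ma : ord_max != a by apply/eqP => /(congr1 val) /= E; have := ltn_ord i; rewrite /a /= in E; lia.
have mb : ord_max != b by apply/eqP => /(congr1 val) /= E; have := ltn_ord j; rewrite /b /= in E; lia.
rewrite /pos_of /sw; case: ifP => h.
- move: h; rewrite /adj => h.
  have n1 : (s^-1)%g ord_max != (s^-1)%g a by rewrite (inj_eq perm_inj).
  have n2 : (s^-1)%g ord_max != (s^-1)%g b by rewrite (inj_eq perm_inj).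
  move: n1 n2 h.
  move: ((s^-1)%g ord_max) ((s^-1)%g a) ((s^-1)%g b) => x y z.
  move=> /eqP n1 /eqP n2 h.
  have n1' : nat_of_ord x <> nat_of_ord y by move=> E; apply: n1; apply: val_inj.
  have n2' : nat_of_ord x <> nat_of_ord z by move=> E; apply: n2; apply: val_inj.
  case/orP: h => /eqP h.
  + have h' : (nat_of_ord y).+1 = nat_of_ord z := h. by apply/idP/idP; lia.
  + have h' : (nat_of_ord z).+1 = nat_of_ord y := h. by apply/idP/idP; lia.
- rewrite !invsw -/a -/b tpermL tpermD // 1?eq_sym //.
Qed.

Theorem lemma3p4 (r : nat) (S : {set 'I_r}) (i j : 'I_r) :
  Ncount S i = Ncount S j.
Proof.
case: r S i j => [|r] S i j; first by case: i.
have H : forall k (hk : k < r.+1), Ncount S (Ordinal hk) = Ncount S ord0.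
  elim=> [|k IH] hk; first by congr Ncount; apply: val_inj.
  have hk' : k < r.+1 by lia.
  by rewrite -(IH hk'); apply: esym; apply: step.
case: i => i hi; case: j => j hj.
by rewrite !H.
Qed.
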